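(* Let $\emptyset\neq S\subseteq\mathbb{S}$. The following assertions are equivalent: (i) $S$ is s-convex; (ii) for all $x_1,x_2\in\mathbb{P}S$ one has $x_1+x_2\in\mathbb{P}S$; (iii) $\mathbb{P}S$ is convex; (iv) $\mathbb{R}_+S$ is a pointed convex cone; (v) there exists a pointed convex cone $K\subseteq\mathbb{R}^n$ such that $S=K\cap\mathbb{S}$; (vi) there exists a convex set $C\subseteq\mathbb{R}^n$ such that $S=\rho(C)$; (vii) there exists a bounded convex set $C\subseteq\mathbb{R}^n$ such that $S=\rho(C)$; (viii) $S=\rho(\operatorname{conv}S)$. If, moreover, $\Phi$ is convex, then (i) is also equivalent to: (ix) $(0,1]\,S$ is convex.
   Context: Standing setting: $n\ge 2$; $\mathbb{R}^n$ carries the usual inner product $\langle\cdot,\cdot\rangle$ and Euclidean norm; $o$ denotes the zero vector. $\Phi:\mathbb{R}^n\to\mathbb{R}_+:=[0,\infty)$ is a continuous function with $\Phi(tx)=t\Phi(x)$ for all $x\in\mathbb{R}^n$, $t\ge 0$, and $\Phi(x)=0$ iff $x=o$. Set $\mathbb{S}:=\{x\in\mathbb{R}^n\mid \Phi(x)=1\}$ (with the topology induced from $\mathbb{R}^n$), $\mathbb{P}:=(0,\infty)$, and $\rho:\mathbb{R}^n\to\{o\}\cup\mathbb{S}$, $\rho(x):=x/\Phi(x)$ for $x\neq o$, $\rho(o):=o$. For $\emptyset\ne\Gamma\subseteq\mathbb{R}$ and $\emptyset\ne A\subseteq\mathbb{R}^n$, $\Gamma A:=\{\gamma a\mid \gamma\in\Gamma,\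 a\in A\}$. For $x,y\in\mathbb{S}$ and $\lambda\in[0,1]$, $\lambda x+_s(1-\lambda)y:=\rho(\lambda x+(1-\lambda)y)$. A nonempty set $S\subseteq\mathbb{S}$ is called s-convex if $\lambda x+_s(1-\lambda)y\in S$ for all $x,y\in S$ and $\lambda\in[0,1]$. A cone $K\subseteq\mathbb{R}^n$ is pointed if $K\cap(-K)=\{o\}$. $\operatorname{conv}$ denotes the convex hull. *)

(* Defs.v *)
From HB Require Import structures.
From mathcomp Require Import all_boot all_order all_algebra.
From mathcomp Require Import all_classical all_reals all_analysis.
Set Implicit Arguments. Unset Strict Implicit. Unset Printing Implicit Defensive.
Import Order.TTheory GRing.Theory Num.Theory.
Import numFieldNormedType.Exports.
Local Open Scope classical_set_scope.
Local Open Scope ring_scope.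

Section Defs.
Variables (R : realType) (n : nat).
Implicit Types (A C K S : set 'rV[R]_n) (Phi : 'rV[R]_n -> R).

Definition enorm (x : 'rV[R]_n) : R := Num.sqrt (\sum_(i < n) x ord0 i ^+ 2).

Definition gauge_like Phi : Prop :=
  [/\ continuous Phi,
      (forall x, 0 <= Phi x),
      (forall x (t : R), 0 <= t -> Phi (t *: x) = t * Phi x)
    & (forall x, Phi x = 0 <-> x = 0)].

Definition Sph Phi : set 'rV[R]_n := [set x | Phi x = 1].

Definition rho Phi (x : 'rV[R]_n) : 'rV[R]_n :=
  if x == 0 then 0 else (Phi x)^-1 *: x.

Definition scaleset (G : set R) A : set 'rV[R]_n :=
  [set z | exists g, G g /\ exists a, A a /\ z = g *: a].

Definition Pset : set R := [set t | 0 < t].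
Definition Rplus : set R := [set t | 0 <= t].
Definition I01 : set R := [set t | 0 < t <= 1].

Definition sadd Phi (l : R) (x y : 'rV[R]_n) : 'rV[R]_n :=
  rho Phi (l *: x + (1 - l) *: y).

Definition s_convex Phi S : Prop :=
  S !=set0 /\
  forall x y l, S x -> S y -> 0 <= l <= 1 -> S (sadd Phi l x y).

Definition cvx_set A : Prop :=
  forall x y (l : R), A x -> A y -> 0 <= l <= 1 -> A (l *: x + (1 - l) *: y).

Definition bnd_set A : Prop := exists M : R, forall x, A x -> enorm x <= M.

Definition is_cone_set K : Prop := forall x (t : R), K x -> 0 <= t -> K (t *: x).

Definition pointed K : Prop := forall x, (K x /\ K (- x)) <-> x = 0.

Definition pointed_convex_cone K : Prop :=
  [/\ is_cone_set K, cvx_set K & pointed K].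

Definition cvx_hull A : set 'rV[R]_n :=
  [set x | forall C, cvx_set C -> A `<=` C -> C x].

Definition cvx_fun Phi : Prop :=
  forall x y (l : R), 0 <= l <= 1 ->
    Phi (l *: x + (1 - l) *: y) <= l * Phi x + (1 - l) * Phi y.

End Defs.

Arguments Pset {R}.
Arguments Rplus {R}.
Arguments I01 {R}.

(* Main.v *)
Require Import Defs.
From HB Require Import structures.
From mathcomp Require Import all_boot all_order all_algebra.
From mathcomp Require Import all_classical all_reals all_analysis.
From mathcomp Require Import ring lra.
Import Order.TTheory GRing.Theory Num.Theory.
Import numFieldNormedType.Exports.
Set Implicit Arguments. Unset Strict Implicit.
Arguments Pset {R} /.
Arguments Rplus {R} /.
Arguments I01 {R} /.
Local Open Scope classical_set_scope.
Local Open Scope ring_scope.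

Section Aux.
Variables (R : realType) (n : nat) (Phi : 'rV[R]_n -> R) (S : set 'rV[R]_n).
Hypothesis Hnn : forall x, 0 <= Phi x.
Hypothesis Hhom : forall x (t : R), 0 <= t -> Phi (t *: x) = t * Phi x.
Hypothesis Hz : forall x, Phi x = 0 <-> x = 0.
Hypothesis HS : S `<=` Sph Phi.
Hypothesis HS0 : S !=set0.

Local Notation P := (scaleset Pset S).

Lemma HSE x : S x -> Phi x = 1.
Proof. exact: HS. Qed.

Lemma phi1_neq0 x : Phi x = 1 -> x != 0.
Proof.
move=> h; apply/eqP => x0; have := Hz x; rewrite h; case=> _ /(_ x0) /eqP.
by rewrite oner_eq0.
Qed.

Lemma S_neq0 x : S x -> x != 0.
Proof. by move=> /HS; apply: phi1_neq0. Qed.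

Lemma rhoZ s t : Phi s = 1 -> 0 < t -> rho Phi (t *: s) = s.
Proof.
move=> hs ht; rewrite /rho scaler_eq0 (negbTE (phi1_neq0 hs)) orbF gt_eqF //.
by rewrite Hhom ?ltW // hs mulr1 scalerA mulVf ?gt_eqF // scale1r.
Qed.

Lemma rho1 s : Phi s = 1 -> rho Phi s = s.
Proof. by move=> hs; have := rhoZ hs ltr01; rewrite scale1r. Qed.

Lemma Phi_gt0 x : x != 0 -> 0 < Phi x.
Proof.
move=> hx; rewrite lt_def Hnn andbT; apply/eqP => /Hz /eqP; exact/negP.
Qed.

Lemma rho_decomp x : x != 0 -> x = Phi x *: rho Phi x.
Proof.
move=> hx; rewrite /rho (negbTE hx) scalerA divff ?scale1r //.
by rewrite gt_eqF // Phi_gt0.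
Qed.

Lemma Phi_rho x : x != 0 -> Phi (rho Phi x) = 1.
Proof.
move=> hx; rewrite /rho (negbTE hx) Hhom ?invr_ge0 // mulVf //.
by rewrite gt_eqF // Phi_gt0.
Qed.

Lemma rho0 : rho Phi 0 = 0.
Proof. by rewrite /rho eqxx. Qed.

Lemma P_rho x : P x -> x != 0 /\ S (rho Phi x).
Proof.
case=> g [/= g0 [a [Sa ->]]]; split.
  by rewrite scaler_eq0 negb_or gt_eqF // S_neq0.
by rewrite rhoZ // HS.
Qed.

Lemma rho_P x : x != 0 -> S (rho Phi x) -> P x.
Proof.
move=> hx hS; exists (Phi x); split; first exact: Phi_gt0.
by exists (rho Phi x); split => //; apply: rho_decomp.
Qed.

Lemma S_P x : S x -> P x.
Proof. by move=> Sx; exists 1; split => //=; exists x; split => //; rewrite scale1r. Qed.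

Lemma PZ x t : P x -> 0 < t -> P (t *: x).
Proof.
case=> g [/= g0 [a [Sa ->]]] ht; exists (t * g); split; first exact: mulr_gt0.
by exists a; split => //; rewrite scalerA.
Qed.

Lemma comb (a b : R) (u v : 'rV[R]_n) : 0 < a + b ->
  (a + b) *: ((a / (a + b)) *: u + (1 - a / (a + b)) *: v) = a *: u + b *: v.
Proof.
move=> hab; rewrite scalerDr !scalerA; congr (_ *: _ + _ *: _); field;
  by rewrite gt_eqF.
Qed.

Lemma comb01 (a b : R) : 0 <= a -> 0 <= b -> 0 < a + b ->
  0 <= a / (a + b) <= 1.
Proof.
move=> ha hb hab; rewrite divr_ge0 ?(ltW hab) //= ler_pdivrMr // mul1r; lra.
Qed.

Definition ii_ := forall x1 x2, P x1 -> P x2 -> P (x1 + x2).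

Lemma i_ii : s_convex Phi S -> ii_.
Proof.
case=> _ hc x1 x2 [g1 [/= g10 [a1 [Sa1 ->]]]] [g2 [/= g20 [a2 [Sa2 ->]]]].
have hs : 0 < g1 + g2 by lra.
rewrite -comb //.
set w := (_ *: a1 + _ *: a2).
have Sw : S (rho Phi w) by apply: hc => //; apply: comb01; lra.
apply: PZ => //; apply: rho_P => //; apply/eqP => w0.
by move: Sw; rewrite w0 rho0 => /S_neq0; rewrite eqxx.
Qed.

Lemma ii_iii : ii_ -> cvx_set P.
Proof.
move=> h x y l Px Py /andP[l0 l1].
have [->|ln0] := eqVneq l 0; first by rewrite scale0r add0r subr0 scale1r.
have [->|ln1] := eqVneq l 1; first by rewrite scale1r subrr scale0r addr0.
apply: h; apply: PZ => //; first by rewrite lt_def ln0.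
by rewrite subr_gt0 lt_neqAle ln1.
Qed.

Lemma iii_ii : cvx_set P -> ii_.
Proof.
move=> h x1 x2 P1 P2.
have -> : x1 + x2 = 2 *: (2^-1 *: x1 + (1 - 2^-1) *: x2).
  have e1 : 2 * 2^-1 = 1 :> R by field.
  have e2 : 2 * (1 - 2^-1) = 1 :> R by field.
  by rewrite scalerDr !scalerA e1 e2 !scale1r.
apply: PZ => //; apply: h => //; apply/andP; split.
  by rewrite invr_ge0.
by rewrite invf_le1 // ler1n.
Qed.

Lemma iii_i : cvx_set P -> s_convex Phi S.
Proof.
move=> h; split => // x y l Sx Sy hl.
exact: (P_rho (h _ _ _ (S_P Sx) (S_P Sy) hl)).2.
Qed.

Local Notation K0 := (scaleset Rplus S).

Lemma K0P x : K0 x <-> x = 0 \/ P x.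
Proof.
split.
  case=> g [/= g0 [a [Sa ->]]].
  have [->|gn0] := eqVneq g 0; first by left; rewrite scale0r.
  by right; exists g; split; [rewrite /= lt_def gn0 | exists a].
case=> [->|[g [/= g0 [a [Sa ->]]]]].
  case: HS0 => s Ss; exists 0; split => //=; exists s; split => //.
  by rewrite scale0r.
by exists g; split; [exact: ltW | exists a].
Qed.

Lemma K0Z x t : K0 x -> 0 <= t -> K0 (t *: x).
Proof.
case=> g [/= g0 [a [Sa ->]]] ht; exists (t * g); split; first exact: mulr_ge0.
by exists a; split => //; rewrite scalerA.
Qed.

Lemma iii_iv : cvx_set P -> pointed_convex_cone K0.
Proof.
move=> h; split.
- by move=> x t; apply: K0Z.
- move=> x y l /K0P[->|Px] /K0P[->|Py] /andP[l0 l1].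
  + by apply/K0P; left; rewrite !scaler0 addr0.
  + by rewrite scaler0 add0r; apply: K0Z; [apply/K0P; right | rewrite subr_ge0].
  + by rewrite scaler0 addr0; apply: K0Z => //; apply/K0P; right.
  + by apply/K0P; right; apply: h => //; rewrite l0 l1.
- move=> x; split.
    case=> /K0P[//|Px] /K0P[/eqP|Pnx]; first by rewrite oppr_eq0 => /eqP.
    have := iii_ii h Px Pnx; rewrite subrr => /P_rho[]; by rewrite eqxx.
  move=> ->; rewrite oppr0; have : K0 0 by apply/K0P; left.
  by [].
Qed.

Lemma iv_v : pointed_convex_cone K0 ->
  exists K, pointed_convex_cone K /\ S = K `&` Sph Phi.
Proof.
move=> h; exists K0; split => //; apply/seteqP; split.
  move=> s Ss; split; last exact: HS.
  by exists 1; split => //=; exists s; rewrite scale1r.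
move=> x [[g [/= g0 [a [Sa ->]]]]] /=.
move=> hg; have : Phi (g *: a) = 1 by [].
rewrite Hhom // (HSE Sa) mulr1 => ->; by rewrite scale1r.
Qed.

Lemma v_iii : (exists K, pointed_convex_cone K /\ S = K `&` Sph Phi) ->
  cvx_set P.
Proof.
move=> [K [[Kc Kv Kp] SK]].
have PK x : P x -> K x.
  case=> g [/= g0 [a [Sa ->]]]; apply: Kc; last exact: ltW.
  by move: Sa; rewrite SK => -[].
move=> x y l Px Py hl; move/andP: (hl) => [l0 l1].
set z := _ + _.
have Kz : K z by apply: Kv => //; apply: PK.
have zn0 : z != 0.
  apply/eqP => z0.
  have [l00|ln0] := eqVneq l 0.
    by move: z0; rewrite /z l00 scale0r add0r subr0 scale1r => y0;
       move: (P_rho Py).1; rewrite y0 eqxx.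
  have hx : K (l *: x) by apply: Kc => //; apply: PK.
  have hnx : K (- (l *: x)).
    have e : - (l *: x) = (1 - l) *: y.
      by apply/eqP; rewrite eq_sym -subr_eq0 opprK addrC; apply/eqP; exact: z0.
    by rewrite e; apply: Kc; [apply: PK | rewrite subr_ge0].
  have /eqP := (Kp (l *: x)).1 (conj hx hnx).
  by rewrite scaler_eq0 (negbTE ln0) /= (negbTE (P_rho Px).1).
apply: rho_P => //; rewrite SK; split; last exact: Phi_rho.
rewrite /rho (negbTE zn0); apply: Kc => //; by rewrite invr_ge0.
Qed.

Lemma vi_ii : (exists C, cvx_set C /\ S = rho Phi @` C) -> ii_.
Proof.
move=> [C [Cv SC]].
have rep x : P x -> exists t c, [/\ 0 < t, C c & x = t *: c].
  case=> g [/= g0 [a [Sa ->]]].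
  have := Sa; rewrite SC => -[c Cc ca].
  have cn0 : c != 0.
    by apply/eqP => c0; move: Sa; rewrite -ca c0 rho0 => /S_neq0; rewrite eqxx.
  exists (g / Phi c), c; split => //.
    by rewrite divr_gt0 // Phi_gt0.
  by rewrite -ca /rho (negbTE cn0) scalerA.
move=> x1 x2 /rep[t1 [c1 [t10 Cc1 ->]]] /rep[t2 [c2 [t20 Cc2 ->]]].
have hs : 0 < t1 + t2 by lra.
rewrite -comb //; set w := (_ *: c1 + _ *: c2).
have Cw : C w by apply: Cv => //; apply: comb01; lra.
have Sw : S (rho Phi w) by rewrite SC; exists w.
apply: PZ => //; apply: rho_P => //; apply/eqP => w0.
by move: Sw; rewrite w0 rho0 => /S_neq0; rewrite eqxx.
Qed.

Definition box : set 'rV[R]_n := [set x | forall i, `|x ord0 i| <= 1].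

Lemma iii_vii : cvx_set P ->
  exists C, [/\ cvx_set C, bnd_set C & S = rho Phi @` C].
Proof.
move=> h; exists (P `&` box); split.
- move=> x y l [Px Bx] [Py By] hl; split; first exact: h.
  move=> i; rewrite !mxE; move/andP: hl => [l0 l1].
  have := Bx i; have := By i; rewrite !ler_norml => /andP[? ?] /andP[? ?].
  apply/andP; split; nra.
- exists (Num.sqrt n%:R) => x [_ Bx]; rewrite /enorm ler_sqrt ?ler0n //.
  apply: (@le_trans _ _ (\sum_(i < n) (1 : R))); last by rewrite sumr_const card_ord.
  apply: ler_sum => i _; have := Bx i; rewrite ler_norml => /andP[? ?]; nra.
- apply/seteqP; split.
    move=> s Ss.
    set d := 1 + \sum_(i < n) `|s ord0 i|.
    have d0 : 0 < d by rewrite /d ltr_pwDl // sumr_ge0.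
    exists (d^-1 *: s); last by rewrite rhoZ ?invr_gt0 // HS.
    split; first by apply: PZ; [apply: S_P | rewrite invr_gt0].
    move=> i; rewrite mxE normrM ger0_norm ?invr_ge0 ?(ltW d0) // mulrC.
    rewrite ler_pdivrMr // mul1r /d (bigD1 i) //=.
    have : 0 <= \sum_(j < n | j != i) `|s ord0 j| by apply: sumr_ge0.
    lra.
  by move=> _ [x [Px _] <-]; exact: (P_rho Px).2.
Qed.

Lemma iii_viii : cvx_set P -> S = rho Phi @` cvx_hull S.
Proof.
move=> h; apply/seteqP; split.
  move=> s Ss; exists s; last by rewrite rho1 // HS.
  by move=> C _; apply.
move=> _ [x hx <-]; apply: (P_rho _).2; apply: hx => //.
by move=> y; apply: S_P.
Qed.

Lemma hull_cvx : cvx_set (cvx_hull S).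
Proof. by move=> x y l hx hy hl C Cv SC; exact: Cv (hx C Cv SC) (hy C Cv SC) hl. Qed.

Lemma i_ix : cvx_fun Phi -> cvx_set P -> cvx_set (scaleset I01 S).
Proof.
move=> hf h x y l [g1 [/= /andP[g10 g11] [a1 [Sa1 ->]]]]
  [g2 [/= /andP[g20 g21] [a2 [Sa2 ->]]]] hl.
have := h _ _ _ (PZ (S_P Sa1) g10) (PZ (S_P Sa2) g20) hl.
case=> t [/= t0 [s [Ss ez]]].
exists t; split; last by exists s.
rewrite /= t0 /=.
have := hf (g1 *: a1) (g2 *: a2) l hl.
have e1 : Phi (g1 *: a1) = g1 by rewrite Hhom ?(ltW g10) // HSE // mulr1.
have e2 : Phi (g2 *: a2) = g2 by rewrite Hhom ?(ltW g20) // HSE // mulr1.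
have e : Phi (t *: s) = t by rewrite Hhom ?(ltW t0) // HSE // mulr1.
rewrite -[X in Phi X <= _]/(l *: (g1 *: a1) + (1 - l) *: (g2 *: a2)) ez e e1 e2.
move/andP: hl => [l0 l1]; nra.
Qed.

Lemma ix_i : cvx_set (scaleset I01 S) -> s_convex Phi S.
Proof.
move=> h; split => // x y l Sx Sy hl.
have Q1 z : S z -> scaleset I01 S z.
  by move=> Sz; exists 1; split; [rewrite /= ltr01 lexx | exists z; rewrite scale1r].
have := h _ _ _ (Q1 _ Sx) (Q1 _ Sy) hl.
case=> t [/= /andP[t0 _] [s [Ss ez]]].
have -> : sadd Phi l x y = rho Phi (t *: s) by rewrite /sadd; congr (rho Phi _); exact: ez.
by rewrite rhoZ // HSE.
Qed.

End Aux.

Theorem proposition1 (R : realType) (n : nat) (Phi : 'rV[R]_n -> R)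
  (S : set 'rV[R]_n) :
  (2 <= n)%N -> gauge_like Phi ->
  S !=set0 -> S `<=` Sph Phi ->
  let i := s_convex Phi S in
  let ii := forall x1 x2, scaleset Pset S x1 -> scaleset Pset S x2 ->
              scaleset Pset S (x1 + x2) in
  let iii := cvx_set (scaleset Pset S) in
  let iv := pointed_convex_cone (scaleset Rplus S) in
  let v := exists K, pointed_convex_cone K /\ S = K `&` Sph Phi in
  let vi := exists C, cvx_set C /\ S = rho Phi @` C in
  let vii := exists C, [/\ cvx_set C, bnd_set C & S = rho Phi @` C] in
  let viii := S = rho Phi @` cvx_hull S in
  let ix := cvx_set (scaleset I01 S) in
  (i <-> ii) /\ (i <-> iii) /\ (i <-> iv) /\ (i <-> v) /\ (i <-> vi) /\
  (i <-> vii) /\ (i <-> viii) /\ (cvx_fun Phi -> (i <-> ix)).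
Proof.
move=> _ [_ Hnn Hhom Hz] HS0 HS i ii iii iv v vi vii viii ix.
have H12 : i -> ii by apply: (i_ii (Phi:=Phi)).
have H23 : ii -> iii by apply: ii_iii.
have H32 : iii -> ii by apply: iii_ii.
have H31 : iii -> i by apply: (iii_i (Phi:=Phi)).
have H34 : iii -> iv by apply: (iii_iv (Phi:=Phi)).
have H45 : iv -> v by apply: (iv_v (Phi:=Phi)).
have H53 : v -> iii by apply: (v_iii (Phi:=Phi)).
have H62 : vi -> ii by apply: (vi_ii (Phi:=Phi)).
have H37 : iii -> vii by apply: (iii_vii (Phi:=Phi)).
have H76 : vii -> vi by case=> C [? ? ?]; exists C.
have H38 : iii -> viii by apply: (iii_viii (Phi:=Phi)).
have H86 : viii -> vi by move=> h; exists (cvx_hull S); split => //; apply: hull_cvx.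
have H13 : i -> iii by move=> /H12 /H23.
split; first by split; [exact: H12 | move=> h; exact: H31 (H23 h)].
split; first by split; [exact: H13 | exact: H31].
split; first by split; [move=> h; exact: H34 (H13 h) | move=> h; exact: H31 (H53 (H45 h))].
split; first by split; [move=> h; exact: H45 (H34 (H13 h)) | move=> h; exact: H31 (H53 h)].
split; first by split; [move=> h; exact: H76 (H37 (H13 h)) | move=> h; exact: H31 (H23 (H62 h))].
split; first by split; [move=> h; exact: H37 (H13 h) | move=> h; exact: H31 (H23 (H62 (H76 h)))].
split; first by split; [move=> h; exact: H38 (H13 h) | move=> h; exact: H31 (H23 (H62 (H86 h)))].
move=> hf; split.
  by move=> h; apply: (i_ix (Phi:=Phi)) => //; exact: H13.
by apply: (ix_i (Phi:=Phi)).
Qed.
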